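(* Let $G$ be a framed graph with framing $f$, and let $a,b\in V(G)$ be distinct vertices. Let $\widetilde G_{ab}$ be the framed graph on $V(G)$ obtained from $G$ as follows: for every vertex $c\ne a,b$, the adjacency of $c$ and $a$ is toggled iff $c$ is adjacent to $b$ in $G$; the adjacency of $a$ and $b$ is toggled iff $f(b)=1$; the framing of $a$ becomes $f(a)+f(b)\pmod 2$; all other adjacencies and framings are unchanged. Then $$D(\widetilde G_{ab})=\widetilde{D(G)}_{ab},$$ where $D(\cdot)$ denotes the nondegeneracy delta-matroid.
   Context: A framed graph is a simple graph $G$ with a map $f:V(G)\to\{0,1\}$; its adjacency matrix over $\mathbb{F}_2$ has diagonal entry $f(v)$ at $v$ and the usual off-diagonal entries. Its nondegeneracy delta-matroid is $D(G)=(V(G);\{U\subseteq V(G)\mid$ the adjacency matrix of the induced framed subgraph $G_U$ is nondegenerate over $\mathbb{F}_2\})$ (empty matrix counts as nondegenerate). For a set system $D=(E;\Phi)$ ($E$ finite, $\Phi\subseteq 2^E$ nonempty) and distinct $a,b\in E$, the sliding of $a$ over $b$ is $\widetilde D_{ab}=(E;\widetilde\Phi_{ab})$ with $\widetilde\Phi_{ab}=\Phi\,\Delta\,\{\phi\sqcup\{a\}\mid \phi\subseteq E\setminus\{a,b\},\ \phi\sqcup\{b\}\in\Phi\}$. *)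

(* Defs.v *)
From mathcomp Require Import all_boot all_algebra.
Set Implicit Arguments. Unset Strict Implicit. Unset Printing Implicit Defensive.
Import GRing.Theory.
Local Open Scope ring_scope.

Record framed_graph (V : finType) := FramedGraph {
  adj : V -> V -> bool;
  fr : V -> bool }.

Definition simple_fg (V : finType) (G : framed_graph V) : Prop :=
  (forall x y, adj G x y = adj G y x) /\ (forall x, adj G x x = false).

Definition b2F (b : bool) : 'F_2 := if b then 1 else 0.

Definition fg_entry (V : finType) (G : framed_graph V) (x y : V) : 'F_2 :=
  if x == y then b2F (fr G x) else b2F (adj G x y).

Definition induced_adjmx (V : finType) (G : framed_graph V) (U : {set V})
  : 'M['F_2]_#|U| :=
  \matrix_(i, j) fg_entry G (enum_val i) (enum_val j).

(* nondegenerate over F_2; the 0x0 matrix has det 1, so empty counts *)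
Definition nondeg_set (V : finType) (G : framed_graph V) (U : {set V}) : bool :=
  \det (induced_adjmx G U) != 0.

Definition nondeg_dm (V : finType) (G : framed_graph V) : {set {set V}} :=
  [set U : {set V} | nondeg_set G U].

Definition sliding (V : finType) (Phi : {set {set V}}) (a b : V)
  : {set {set V}} :=
  let T := [set phi :|: [set a] | phi in
             [set phi : {set V} | (phi \subset ~: [set a; b])
                                  && (phi :|: [set b] \in Phi)]] in
  (Phi :\: T) :|: (T :\: Phi).

Definition slide_graph (V : finType) (G : framed_graph V) (a b : V)
  : framed_graph V :=
  FramedGraph
    (fun x y =>
       if x == y then adj G x y
       else if (x == a) && (y == b) || (x == b) && (y == a)
            then adj G x y (+) fr G b
       else if x == a then adj G x y (+) adj G b y
       else if y == a then adj G x y (+) adj G x b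
       else adj G x y)
    (fun x => if x == a then fr G a (+) fr G b else fr G x).

(* Main.v *)
Require Import Defs.
From mathcomp Require Import all_boot all_algebra ring.
Import GRing.Theory. Local Open Scope ring_scope.

Lemma F2_two : (2%:R : 'F_2) = 0.
Proof. apply/val_inj. reflexivity. Qed.
Lemma F2_addxx (x : 'F_2) : x + x = 0.
Proof. by rewrite -mulr2n -mulr_natr F2_two mulr0. Qed.
Lemma F2_cases (x : 'F_2) : x = 0 \/ x = 1.
Proof. case: x => [[|[|m]]] H. left; exact/val_inj. right; exact/val_inj. by []. Qed.

Lemma b2F_xor p q : b2F (p (+) q) = b2F p + b2F q.
Proof. by case: p; case: q; rewrite /b2F /= ?addr0 ?add0r ?F2_addxx. Qed.



Lemma entry_slide (V : finType) (G : framed_graph V) (a b : V) :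
  simple_fg G -> a != b -> forall x y,
  fg_entry (slide_graph G a b) x y =
  fg_entry G x y + (if x == a then fg_entry G b y else 0)
   + (if y == a then fg_entry G x b else 0)
   + (if (x == a) && (y == a) then fg_entry G b b else 0).
Proof.
move=> [sym irr] ab x y.
rewrite /fg_entry /slide_graph /=.
have ba : b != a by rewrite eq_sym.
case: (eqVneq x a) => [->|xa]; [|case: (eqVneq x b) => [->|xb]];
case: (eqVneq y a) => [->|ya]; try (case: (eqVneq y b) => [->|yb]);
rewrite /= ?eqxx ?(negbTE ab) ?(negbTE ba) ?(negbTE xa) ?(negbTE xb) ?(negbTE ya) ?(negbTE yb) /= ?b2F_xor ?addr0.
all: try (case: (eqVneq x y) => [->|xy]; rewrite ?eqxx ?(negbTE xy) /= ?addr0 //).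
- by rewrite (sym b a) -(addrA (b2F (fr G a))) F2_addxx addr0.
all: try done.
by case: (b == y).
Qed.

Lemma det_row_split (R : comRingType) n (k : 'I_n) (B C D : 'M[R]_n) :
  (forall i j, i != k -> B i j = C i j) -> (forall i j, i != k -> D i j = C i j) ->
  (forall j, B k j = C k j + D k j) -> \det B = \det C + \det D.
Proof.
move=> h1 h2 h3.
rewrite (determinant_multilinear (b:=1) (c:=1) (i0:=k) (B:=C) (C:=D)) ?mul1r //.
- by apply/rowP => j; rewrite !mxE !mul1r h3.
- by apply/matrixP => i j; rewrite !mxE h1 // eq_sym neq_lift.
- by apply/matrixP => i j; rewrite !mxE h1 ?h2 // eq_sym neq_lift.
Qed.

Lemma det_col_split (R : comRingType) n (k : 'I_n) (B C D : 'M[R]_n) :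
  (forall i j, j != k -> B i j = C i j) -> (forall i j, j != k -> D i j = C i j) ->
  (forall i, B i k = C i k + D i k) -> \det B = \det C + \det D.
Proof.
move=> h1 h2 h3; rewrite -det_tr -(det_tr C) -(det_tr D).
apply: (@det_row_split _ _ k) => [i j ik|i j ik|j]; rewrite !mxE; auto.
Qed.

Lemma det_reindex (R : comRingType) (V : finType) (A : V -> V -> R) n m
  (e1 : 'I_n -> V) (e2 : 'I_m -> V) :
  injective e1 -> injective e2 ->
  (forall j, exists i, e1 i == e2 j) -> (forall i, exists j, e2 j == e1 i) ->
  \det (\matrix_(i, j) A (e1 i) (e1 j)) = \det (\matrix_(i, j) A (e2 i) (e2 j)).
Proof.
move=> i1 i2 h12 h21.
have Hp j : e1 (xchoose (h12 j)) = e2 j by exact/eqP/(xchooseP (h12 j)).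
have Hq i : e2 (xchoose (h21 i)) = e1 i by exact/eqP/(xchooseP (h21 i)).
have pinj : injective (fun j => xchoose (h12 j)).
  by move=> j k /(congr1 e1); rewrite !Hp; exact: i2.
have qinj : injective (fun i => xchoose (h21 i)).
  by move=> j k /(congr1 e2); rewrite !Hq; exact: i1.
have Enm : n = m.
  by have := leq_card _ pinj; have := leq_card _ qinj; rewrite !card_ord => l1 l2; apply/eqP; rewrite eqn_leq l1 l2.
subst m.
have -> : \matrix_(i, j) A (e2 i) (e2 j) =
   row_perm (perm.perm pinj) (col_perm (perm.perm pinj) (\matrix_(i, j) A (e1 i) (e1 j))).
  by apply/matrixP => i j; rewrite !mxE !perm.permE !Hp.
rewrite row_permE col_permE !det_mulmx !det_perm mulrCA -signr_addb perm.odd_permV addbb expr0 mulr1.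
done.
Qed.

Lemma fg_sym (V : finType) (G : framed_graph V) : simple_fg G ->
  forall x y, fg_entry G x y = fg_entry G y x.
Proof.
move=> [sym _] x y; rewrite /fg_entry eq_sym.
by case: eqP => [->|]; rewrite // sym.
Qed.

Lemma F2_pqqr (p q r : 'F_2) : (p + q) + (q + r) = p + r.
Proof. by rewrite addrA -(addrA p) F2_addxx addr0. Qed.

Lemma det_slide_in (V : finType) (G : framed_graph V) (a b : V) (U : {set V}) :
  simple_fg G -> a != b -> a \in U ->
  \det (induced_adjmx (slide_graph G a b) U) =
  \det (induced_adjmx G U) +
  \det (\matrix_(i, j) fg_entry G (if enum_val i == a then b else enum_val i)
                                  (if enum_val j == a then b else enum_val j)
        : 'M_#|U|).
Proof.
move=> sG ab Ha.
pose s : 'I_#|U| -> V := enum_val.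
pose A := fg_entry G.
pose sg x := if x == a then b else x.
pose ia := enum_rank_in Ha a.
have sia : s ia = a by exact: enum_rankK_in.
have sna i : i != ia -> s i != a.
  apply: contra => /eqP e; apply/eqP; apply: enum_val_inj; by rewrite -/s e sia.
have sgn i : i != ia -> sg (s i) = s i by move=> H; rewrite /sg (negbTE (sna i H)).
pose X (g : V -> V) : 'M_#|U| :=
  \matrix_(i, j) (A (g (s i)) (s j) + (if s j == a then A (g (s i)) b else 0)).
pose M (g h : V -> V) : 'M_#|U| := \matrix_(i, j) A (g (s i)) (h (s j)).
have e1 : \det (induced_adjmx (slide_graph G a b) U) = \det (X id) + \det (X sg).
  apply: (@det_row_split _ _ ia) => [i j ii|i j ii|j]; rewrite !mxE.
  - by rewrite entry_slide // -/s (negbTE (sna i ii)) /= !addr0.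
  - by rewrite sgn.
  - rewrite entry_slide // -/s sia /sg eqxx /=.
    by case: (s j == a); rewrite ?addr0 /= /A; ring.
have e2 g : \det (X g) = \det (M g id) + \det (M g sg).
  apply: (@det_col_split _ _ ia) => [i j jj|i j jj|i]; rewrite !mxE.
  - by rewrite (negbTE (sna j jj)) addr0.
  - by rewrite sgn.
  - by rewrite sia /sg eqxx.
have e3 : \det (M id sg) = \det (M sg id).
  rewrite -det_tr; congr (\det _); apply/matrixP => i j; rewrite !mxE.
  exact: fg_sym.
rewrite e1 !e2 e3 F2_pqqr.
congr (\det _ + \det _); apply/matrixP => i j; by rewrite !mxE.
Qed.

Lemma F2_xor_neq (p q : 'F_2) : (p + q != 0) = (p != 0) && ~~ (q != 0) || (q != 0) && ~~ (p != 0).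
Proof.
have h10 : (1 : 'F_2) != 0 by apply/eqP => /(congr1 val).
by case: (F2_cases p) => ->; case: (F2_cases q) => ->;
  rewrite ?addr0 ?add0r ?F2_addxx ?eqxx ?h10.
Qed.

Theorem theorem4p2 (V : finType) (G : framed_graph V) (a b : V) :
  simple_fg G -> a != b ->
  nondeg_dm (slide_graph G a b) = sliding (nondeg_dm G) a b.
Proof.
move=> sG ab.
have ba : b != a by rewrite eq_sym.
apply/setP => U.
have memT : (U \in [set phi :|: [set a] | phi in
             [set phi : {set V} | (phi \subset ~: [set a; b])
                                  && (phi :|: [set b] \in nondeg_dm G)]])
   = [&& a \in U, b \notin U & nondeg_set G ((U :\ a) :|: [set b])].
  apply/imsetP/and3P.
  - move=> [phi]; rewrite inE => /andP [sub hin] ->.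
    have aphi : a \notin phi.
      by apply/negP => /(subsetP sub); rewrite !inE eqxx.
    have bphi : b \notin phi.
      by apply/negP => /(subsetP sub); rewrite !inE eqxx orbT.
    split.
    + by rewrite !inE eqxx orbT.
    + by rewrite !inE negb_or bphi ba.
    + move: hin; rewrite inE; congr (nondeg_set G _).
      apply/setP => x; rewrite !inE.
      by case: (eqVneq x a) => [->|xa]; rewrite ?(negbTE aphi) ?(negbTE ab) ?orbF.
  - move=> [Ha Hb Hn]; exists (U :\ a).
    + rewrite !inE Hn andbT; apply/subsetP => x; rewrite !inE negb_or.
      move=> /andP [xa xU]; rewrite xa /=; apply: contraNneq Hb => <-; done.
    + by rewrite setUC setD1K.
rewrite /sliding in_setU !in_setD memT /nondeg_dm !inE.
case Ha : (a \in U) => /=; last first.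
  rewrite andbF orbF /nondeg_set; congr (\det _ != 0).
  apply/matrixP => i j; rewrite !mxE entry_slide //.
  have na (k : 'I_#|U|) : (enum_val k == a :> V) = false.
    apply/negbTE/eqP => E; move/negbT/negP: Ha; apply; rewrite -E; exact: enum_valP.
  by rewrite !na /= !addr0.
rewrite {1}/nondeg_set det_slide_in //.
case Hb : (b \in U) => /=.
  rewrite andbF orbF.
  rewrite addrC (@determinant_alternate _ _ _ (enum_rank_in Ha a) (enum_rank_in Hb b)) ?add0r //.
  - apply/eqP => E; move: (congr1 enum_val E); rewrite !enum_rankK_in //; exact/eqP.
  - move=> j; rewrite !mxE !enum_rankK_in // eqxx (negbTE ba) //.
rewrite (@det_reindex _ _ (fg_entry G) _ _ (fun i : 'I_#|U| => if enum_val i == a then b else enum_val i) (@enum_val _ (mem ((U :\ a) :|: [set b])))).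
- by rewrite /nondeg_set /induced_adjmx F2_xor_neq [X in X || _]andbC [X in _ || X]andbC.
- move=> i j; case: (eqVneq (enum_val i) a) => [ia|ia]; case: (eqVneq (enum_val j) a) => [ja|ja].
  + by move=> _; apply: enum_val_inj; rewrite ia ja.
  + by move=> E; move: (enum_valP j); rewrite -E Hb.
  + by move=> E; move: (enum_valP i); rewrite E Hb.
  + exact: enum_val_inj.
- exact: enum_val_inj.
- move=> j; have := enum_valP j; rewrite !inE => /orP [/andP [xa xU]|/eqP xb].
  + exists (enum_rank_in xU (enum_val j)); rewrite enum_rankK_in // (negbTE xa) //.
  + exists (enum_rank_in Ha a); rewrite enum_rankK_in // eqxx xb //.
- move=> i; set x := (if _ then _ else _).
  have xU' : x \in (U :\ a) :|: [set b].
    rewrite /x; case: eqP => [_|ia]; rewrite !inE ?eqxx ?orbT //=.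
    apply/orP; left; apply/andP; split; [exact/eqP | exact: enum_valP].
  by exists (enum_rank_in xU' x); rewrite enum_rankK_in.
Qed.
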